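(* Let $d\ge 1$ and $n\ge 1$ be integers, let $R=\mathbb{Q}[a_{i,j}:1\le i,j\le n]$, and fix $i,j,l\in\{1,\dots,n\}$ (not necessarily distinct). Then \[ z(\mathrm{fern}_{d,n},\mu(i,j,l))=(B^n)_{i,j}, \] where $B$ is the $n\times n$ matrix over $R$ with entries $B_{u,v}=a_{u,v}\,a_{u,l}^{\,d-1}$.
   Context: $\mathrm{fern}_{d,n}$ is the rooted plane tree with a path $v_0,v_1,\dots,v_n$ where $v_0$ is the root, each of $v_0,\dots,v_{n-1}$ has exactly $d$ children of which the leftmost is $v_{k+1}$ and the other $d-1$ are leaves, and $v_n$ is a leaf (so it has $n$ vertices with $d$ children, each such vertex has at most one non-leaf child, and that child is leftmost). A labeling of a rooted plane tree $T$ is a map $\lambda\colon V(T)\to\{1,\dots,n\}$; for an edge $e$ from parent $v$ to child $u$ put $w(e,\lambda)=a_{\lambda(v),\lambda(u)}$ and $w(T,\lambda)=\prod_{e}w(e,\lambda)$. A root-leaf labeling is a map $\mu$ from the set consisting of the root and the leaves of $T$ to $\{1,\dots,n\}$, and $z(T,\mu)=\sum_{\lambda}w(T,\lambda)$, the sum over all labelings $\lambda$ of $T$ agreeing with $\mu$ on the root and leaves. $\mu(i,j,l)$ is the root-leaf labeling of $\mathrm{fern}_{d,n}$ that labels the root $i$, the leaf $v_n$ by $j$, and every other leaf by $l$. *)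

(* Defs.v *)
From HB Require Import structures.
From mathcomp Require Import all_boot all_order all_algebra.
From mathcomp Require Export mpoly.
Set Implicit Arguments.
Unset Strict Implicit.
Unset Printing Implicit Defensive.
Import GRing.Theory.
Local Open Scope ring_scope.

Inductive ptree := Node of seq ptree.

(* Vertices are addresses: the root is [::]; the k-th child (0-based,
   left to right) of the vertex with address p has address rcons p k. *)
Fixpoint vertices (t : ptree) : seq (seq nat) :=
  let: Node cs := t in
  [::] :: (fix aux (k : nat) (cs : seq ptree) : seq (seq nat) :=
             match cs with
             | [::] => [::]
             | c :: cs' => map (cons k) (vertices c) ++ aux k.+1 cs'
             end) 0%N cs.

Definition vtx (t : ptree) := seq_sub (vertices t).

Definition is_child (v u : seq nat) : bool :=
  (size u == (size v).+1) && (take (size v) u == v).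

Definition is_root (t : ptree) (v : vtx t) : bool := val v == [::].
Definition is_leaf (t : ptree) (v : vtx t) : bool :=
  [forall u : vtx t, ~~ is_child (val v) (val u)].

Definition weight {R : comPzRingType} (n : nat) (a : 'I_n -> 'I_n -> R)
    (t : ptree) (lam : {ffun vtx t -> 'I_n}) : R :=
  \prod_(v : vtx t) \prod_(u : vtx t | is_child (val v) (val u)) a (lam v) (lam u).

(* A root-leaf labeling mu is given as a map on addresses; only its values on
   the root and the leaves of t are used.
   z(T, mu) = sum over labelings lambda agreeing with mu on root and leaves. *)
Definition zsum {R : comPzRingType} (n : nat) (a : 'I_n -> 'I_n -> R)
    (t : ptree) (mu : seq nat -> 'I_n) : R :=
  \sum_(lam : {ffun vtx t -> 'I_n} |
          [forall v : vtx t, (is_root v || is_leaf v) ==> (lam v == mu (val v))])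
     weight a lam.

(* fern_{d,k}: path v_0 ... v_k, each v_m (m < k) has d children, the leftmost
   being v_{m+1}, the other d-1 being leaves; v_k is a leaf. *)
Fixpoint fern (d k : nat) : ptree :=
  match k with
  | 0 => Node [::]
  | k'.+1 => Node (fern d k' :: nseq d.-1 (Node [::]))
  end.

(* mu(i,j,l) on fern_{d,n}: root -> i, leaf v_n (address nseq n 0) -> j,
   every other leaf -> l. *)
Definition mu_fern (n : nat) (i j l : 'I_n) (p : seq nat) : 'I_n :=
  if p == [::] then i else if p == nseq n 0%N then j else l.

Definition avar (n : nat) (u v : 'I_n) : {mpoly rat[n * n]} :=
  'X_(mxvec_index u v).

Definition Bmat (n d : nat) (l : 'I_n) : 'M[{mpoly rat[n * n]}]_n :=
  \matrix_(u < n, v < n) (avar u v * avar u l ^+ d.-1).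

(* Main.v *)
Require Import Defs.
From HB Require Import structures.
From mathcomp Require Import all_boot all_order all_algebra.
From mathcomp Require Import mpoly ring.
From Stdlib Require Import FunctionalExtensionality.
Set Implicit Arguments.
Unset Strict Implicit.
Unset Printing Implicit Defensive.
Import GRing.Theory.
Local Open Scope ring_scope.

Lemma big_seq_sub (T : choiceType) (s : seq T) (Us : uniq s) (R : Type) (idx : R) op
   (P : pred T) (F : T -> R) :
  \big[op/idx]_(v : seq_sub s | P (val v)) F (val v) = \big[op/idx]_(p <- s | P p) F p.
Proof.
rewrite -[in RHS](val_seq_sub_enum Us) big_map /index_enum !unlock /=. by [].
Qed.

Lemma forall_seq_sub (T : choiceType) (s : seq T) (Q : pred T) :
  [forall v : seq_sub s, Q (val v)] = all Q s.
Proof.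
apply/forallP/allP => H.
  by move=> x Hx; exact: (H (SeqSub Hx)).
by move=> v; apply: H; exact: (ssvalP v).
Qed.

Section Sums.
Variables (R : comPzRingType) (n : nat) (y0 : 'I_n).

Definition upd (g : seq nat -> 'I_n) (x : seq nat) (y : 'I_n) : seq nat -> 'I_n :=
  fun p => if p == x then y else g p.

Fixpoint SumL (s : seq (seq nat)) (H : (seq nat -> 'I_n) -> R) : R :=
  match s with
  | [::] => H (fun _ => y0)
  | x :: s' => \sum_(y : 'I_n) SumL s' (fun g => H (upd g x y))
  end.

Definition glam (s : seq (seq nat)) (lam : {ffun seq_sub s -> 'I_n}) : seq nat -> 'I_n :=
  fun p => if (insub p : option (seq_sub s)) is Some v then lam v else y0.

Lemma glam_val s (lam : {ffun seq_sub s -> 'I_n}) v : glam lam (val v) = lam v.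
Proof. by rewrite /glam valK. Qed.

Lemma sum_ffun s : uniq s -> forall H,
  \sum_(lam : {ffun seq_sub s -> 'I_n}) H (glam lam) = SumL s H.
Proof.
elim: s => [|x s IH] Us H /=.
  have E : forall lam : {ffun seq_sub [::] -> 'I_n}, glam lam = fun _ => y0.
    move=> lam; apply: functional_extensionality => p.
    by rewrite /glam insubF.
  under eq_bigr => lam _ do rewrite E.
  by rewrite sumr_const card_ffun card_seq_sub // expn0.
move: Us => /= /andP[xs Us].
under [RHS]eq_bigr => y _ do rewrite -IH //.
rewrite pair_big /=.
have xin : x \in x :: s by rewrite mem_head.
pose xs0 : seq_sub (x :: s) := SeqSub xin.
have embP : forall w : seq_sub s, val w \in x :: s.
  by move=> w; rewrite inE (ssvalP w) orbT.
pose emb (w : seq_sub s) : seq_sub (x :: s) := SeqSub (embP w).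
pose phi (p : 'I_n * {ffun seq_sub s -> 'I_n}) : {ffun seq_sub (x :: s) -> 'I_n} :=
  [ffun v => if val v == x then p.1 else glam p.2 (val v)].
pose psi (lam : {ffun seq_sub (x :: s) -> 'I_n}) : 'I_n * {ffun seq_sub s -> 'I_n} :=
  (lam xs0, [ffun w => lam (emb w)]).
have phiK : cancel phi psi.
  move=> [y lam']; rewrite /psi /phi ffunE /= eqxx; congr pair.
  apply/ffunP => w; rewrite !ffunE /=.
  have ws : val w \in s := ssvalP w.
  have -> : (ssval w == x) = false.
    by apply/negbTE; apply: contraNneq xs => <-.
  exact: glam_val.
have psiK : cancel psi phi.
  move=> lam; apply/ffunP => v; rewrite /phi /psi !ffunE /=.
  case: eqP => [e|ne].
    by congr (lam _); apply: val_inj.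
  rewrite /glam; case: insubP => [w _ wv|].
    by rewrite ffunE; congr (lam _); apply: val_inj.
  move=> /negP nv; exfalso; apply: nv.
  have := ssvalP v; rewrite inE => /orP[/eqP e|//].
  by case: ne.
rewrite (reindex phi); last by exists psi => ? _; [apply: phiK | apply: psiK].
apply: eq_bigr => [[y lam']] _ /=; congr H.
apply: functional_extensionality => p.
rewrite {1}/glam; case: insubP => [v _ vp|].
  by rewrite /phi ffunE vp /upd.
rewrite inE negb_or => /andP[px ps].
rewrite /upd (negPf px) /glam insubF //.
by apply/negbTE.
Qed.

Lemma SumL_ext s H H' : (forall g, H g = H' g) -> SumL s H = SumL s H'.
Proof.
elim: s H H' => [|x s IH] H H' E /=; first exact: E.
by apply: eq_bigr => y _; apply: IH => g; apply: E.
Qed.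

Lemma SumL_scale s c H : SumL s (fun g => c * H g) = c * SumL s H.
Proof.
elim: s H => [|x s IH] H //=.
rewrite mulr_sumr; apply: eq_bigr => y _; exact: IH.
Qed.

Lemma SumL_sum s (F : 'I_n -> (seq nat -> 'I_n) -> R) :
  SumL s (fun g => \sum_(y : 'I_n) F y g) = \sum_(y : 'I_n) SumL s (F y).
Proof.
elim: s F => [|x s IH] F //=.
under eq_bigr => z _ do rewrite (IH (fun y g => F y (upd g x z))).
exact: exchange_big.
Qed.

Definition mix (s1 : seq (seq nat)) (g1 g2 : seq nat -> 'I_n) : seq nat -> 'I_n :=
  fun p => if p \in s1 then g1 p else g2 p.

Lemma SumL_cat s1 s2 H :
  SumL (s1 ++ s2) H = SumL s1 (fun g1 => SumL s2 (fun g2 => H (mix s1 g1 g2))).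
Proof.
elim: s1 H => [|x s1 IH] H /=.
  by apply: SumL_ext => g; congr H.
apply: eq_bigr => y _; rewrite IH.
apply: SumL_ext => g1; apply: SumL_ext => g2; congr H.
apply: functional_extensionality => p.
rewrite /mix /upd inE; case: eqP => //.
Qed.

Definition lift0 (g : seq nat -> 'I_n) : seq nat -> 'I_n :=
  fun p => match p with 0%N :: p' => g p' | _ => y0 end.

Lemma SumL_map0 s H :
  SumL (map (cons 0%N) s) H = SumL s (fun g => H (lift0 g)).
Proof.
elim: s H => [|x s IH] H /=.
  by congr H; apply: functional_extensionality => -[|[|m] p].
apply: eq_bigr => y _; rewrite IH.
apply: SumL_ext => g; congr H.
apply: functional_extensionality => -[|[|m] p] //=.
Qed.

Lemma sum_delta (F : 'I_n -> R) x : \sum_(y : 'I_n) (y == x)%:R * F y = F x.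
Proof.
rewrite (bigD1 x) //= eqxx mul1r big1 ?addr0 // => y /negPf ->.
by rewrite mul0r.
Qed.

Lemma SumL_delta s (c : seq nat -> 'I_n) F : uniq s ->
  SumL s (fun g => (all (fun p => g p == c p) s)%:R * F g) =
  F (fun p => if p \in s then c p else y0).
Proof.
elim: s F => [|x s IH] F /=.
  move=> _; rewrite mul1r; congr F.
move=> /andP[xs Us].
have E : forall y g, ((upd g x y x == c x) && all (fun p => upd g x y p == c p) s)%:R
     * F (upd g x y) = (y == c x)%:R * ((all (fun p => g p == c p) s)%:R * F (upd g x y)).
  move=> y g; rewrite /upd eqxx.
  rewrite (@eq_in_all _ _ (fun p => g p == c p)); last first.
    by move=> p ps; have -> : (p == x) = false by apply/negbTE; apply: contraNneq xs => <-.
  by rewrite -mulnb natrM mulrA.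
under eq_bigr => y _ do under SumL_ext => g do rewrite E.
under eq_bigr => y _ do rewrite SumL_scale.
rewrite sum_delta IH //; congr F.
apply: functional_extensionality => p; rewrite /upd inE.
by case: eqP => [->|].
Qed.

End Sums.


Lemma aux_nseq d k : (fix aux (k : nat) (cs : seq ptree) : seq (seq nat) :=
             match cs with
             | [::] => [::]
             | c :: cs' => map (cons k) (vertices c) ++ aux k.+1 cs'
             end) k (nseq d (Node [::])) = [seq [:: m] | m <- iota k d].
Proof. elim: d k => //= d IH k. by rewrite IH. Qed.

Lemma vfern d k : vertices (fern d k.+1) =
  [::] :: map (cons 0%N) (vertices (fern d k)) ++ [seq [:: m] | m <- iota 1 d.-1].
Proof. rewrite [fern _ _.+1]/= [vertices _]/=. by rewrite aux_nseq. Qed.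

Lemma Vcons t : vertices t = [::] :: behead (vertices t).
Proof. by case: t. Qed.

Lemma uniqV d k : uniq (vertices (fern d k)).
Proof.
elim: k => [|k IH] //; rewrite vfern cons_uniq mem_cat negb_or cat_uniq.
have inj0 : injective (cons 0%N) by move=> ? ? [].
rewrite map_inj_uniq // IH /= -andbA.
apply/and4P; split.
- by apply/mapP => -[p _].
- by apply/mapP => -[m _].
- apply/hasPn => q /mapP[m]; rewrite mem_iota => /andP[m1 _] ->.
  by apply/mapP => -[p _ [e]]; rewrite e in m1.
- by rewrite map_inj_uniq ?iota_uniq // => ? ? [].
Qed.

Lemma is_child00 p q : is_child (0%N :: p) (0%N :: q) = is_child p q.
Proof. by rewrite /is_child /= eqseq_cons eqxx. Qed.

Section Fern.
Variables (R : comPzRingType) (n : nat) (a : 'I_n -> 'I_n -> R) (y0 : 'I_n).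
Variables (d : nat) (j l : 'I_n).

Local Notation V k := (vertices (fern d k)).
Local Notation S := [seq [:: m] | m <- iota 1 d.-1].

Definition Lf (W : seq (seq nat)) p := all (fun q => ~~ is_child p q) W.
Definition Wg (W : seq (seq nat)) (g : seq nat -> 'I_n) : R :=
  \prod_(p <- W) \prod_(q <- W | is_child p q) a (g p) (g q).
Definition nu k (p : seq nat) : 'I_n := if p == nseq k 0%N then j else l.
Definition LC k (g : seq nat -> 'I_n) :=
  all (fun p => Lf (V k) p ==> (g p == nu k p)) (V k).

Lemma all_Vs k (P : pred (seq nat)) :
  all P (V k.+1) = [&& P [::], all (fun p => P (0%N :: p)) (V k) & all (fun m => P [:: m]) (iota 1 d.-1)].
Proof. by rewrite vfern /= all_cat !all_map. Qed.

Lemma big_Vs k (F : seq nat -> R) :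
  \prod_(p <- V k.+1) F p = F [::] * ((\prod_(p <- V k) F (0%N :: p)) * \prod_(m <- iota 1 d.-1) F [:: m]).
Proof. by rewrite vfern big_cons big_cat !big_map. Qed.

Lemma big_Vs_cond k (P : pred (seq nat)) (F : seq nat -> R) :
  \prod_(p <- V k.+1 | P p) F p = (if P [::] then F [::] else 1) *
     ((\prod_(p <- V k | P (0%N :: p)) F (0%N :: p)) * \prod_(m <- iota 1 d.-1 | P [:: m]) F [:: m]).
Proof. by rewrite vfern big_cons big_cat !big_map; case: (P [::]); rewrite ?mul1r. Qed.

Lemma Lf_nil k : Lf (V k.+1) [::] = false.
Proof. by rewrite /Lf all_Vs (Vcons (fern d k)). Qed.

Lemma Lf_cons0 k p : Lf (V k.+1) (0%N :: p) = Lf (V k) p.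
Proof.
rewrite /Lf all_Vs /=.
under eq_all do rewrite is_child00.
rewrite [X in _ && X]all_predT ?andbT //.
Qed.

Lemma Lf_S k m : (0 < m)%N -> Lf (V k.+1) [:: m] = true.
Proof.
move=> m0; rewrite /Lf all_Vs /=; apply/andP; split; apply/allP => p _ /=.
  rewrite /is_child /= eqseq_cons; case: m m0 => //=; by rewrite andbF.
by rewrite /is_child.
Qed.

Lemma nil_notin_behead k : [::] \notin behead (V k).
Proof. by have := uniqV d k; rewrite (Vcons (fern d k)) /= => /andP[]. Qed.

Lemma LCstep k g : LC k.+1 g =
  LC k (fun p => g (0%N :: p)) && all (fun p => g p == l) S.
Proof.
rewrite /LC all_Vs Lf_nil implyFb andTb; congr andb.
  apply: eq_all => p; rewrite Lf_cons0 /nu.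
  by rewrite [nseq _.+1 _]/= eqseq_cons eqxx.
rewrite all_map; apply: eq_in_all => m; rewrite mem_iota => /andP[m0 _].
rewrite Lf_S // /nu /= eqseq_cons.
by case: m m0.
Qed.

Lemma Wstep k g : Wg (V k.+1) g =
  a (g [::]) (g [:: 0%N]) * \prod_(p <- S) a (g [::]) (g p) * Wg (V k) (fun p => g (0%N :: p)).
Proof.
have c1 : forall p, is_child p [::] = false by [].
have c2 : forall p m, is_child (0%N :: p) [:: m] = false by [].
have c3 : forall m p, (0 < m)%N -> is_child [:: m] (0%N :: p) = false.
  by move=> [|m] p //= _; rewrite /is_child /= andbF.
have c4 : forall m m', is_child [:: m] [:: m'] = false by [].
have c5 : forall m, is_child [::] [:: m] = true by [].
have c6 : forall p, is_child [::] (0%N :: p) = (p == [::]).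
  by case.
rewrite /Wg big_Vs; congr (_ * _).
  rewrite big_Vs_cond c1 mul1r (Vcons (fern d k)) big_cons c6 eqxx -mulrA; congr (_ * _).
  rewrite big1_seq ?mul1r; last first.
    move=> p /andP[]; rewrite c6 => /eqP -> qin.
    by move: (nil_notin_behead k); rewrite qin.
  by rewrite big_map; apply: eq_bigl => m; rewrite c5.
rewrite [X in _ * X](_ : _ = 1) ?mulr1; last first.
  rewrite big_seq big1 // => m; rewrite mem_iota => /andP[m0 _].
  rewrite big_Vs_cond c1 mul1r.
  rewrite big_pred0; last by move=> p; rewrite c3.
  by rewrite big_pred0 ?mulr1.
apply: eq_bigr => p _; rewrite big_Vs_cond c1 mul1r.
under eq_bigl do rewrite is_child00.
by rewrite [X in _ * X]big_pred0 ?mulr1.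
Qed.

Lemma LC_congr k g g' : {in V k, g =1 g'} -> LC k g = LC k g'.
Proof. by move=> E; apply: eq_in_all => p Hp; rewrite E. Qed.

Lemma Wg_congr W g g' : {in W, g =1 g'} -> Wg W g = Wg W g'.
Proof.
move=> E; apply: eq_big_seq => p Hp.
rewrite big_seq_cond [RHS]big_seq_cond; apply: eq_bigr => q /andP[Hq _].
by rewrite E // E.
Qed.

Lemma SumL_cons s x (H : (seq nat -> 'I_n) -> R) : SumL y0 (x :: s) H = \sum_(y : 'I_n) SumL y0 s (fun g => H (upd g x y)).
Proof. by []. Qed.

Lemma upd_eq (g : seq nat -> 'I_n) x y : upd g x y x = y.
Proof. by rewrite /upd eqxx. Qed.

Lemma prod_const_seq (s : seq (seq nat)) (c : R) : \prod_(p <- s) c = c ^+ size s.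
Proof. by elim: s => [|x s IH]; rewrite ?big_nil ?expr0 // big_cons IH exprS. Qed.

Lemma uniqS : uniq S.
Proof. by rewrite map_inj_uniq ?iota_uniq // => ? ? []. Qed.

Definition Phi k x := SumL y0 (V k) (fun g => (g [::] == x)%:R * ((LC k g)%:R * Wg (V k) g)).

Lemma Phi_step k x : Phi k.+1 x = \sum_(y : 'I_n) (a x y * a x l ^+ d.-1) * Phi k y.
Proof.
pose K z (g : seq nat -> 'I_n) := (LC k (fun p => g (0%N :: p)))%:R *
  ((all (fun p => g p == l) S)%:R *
   (a z (g [:: 0%N]) * \prod_(p <- S) a z (g p) * Wg (V k) (fun p => g (0%N :: p)))).
have E1 : forall g, (g [::] == x)%:R * ((LC k.+1 g)%:R * Wg (V k.+1) g)
   = (g [::] == x)%:R * K (g [::]) g.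
  by move=> g; rewrite LCstep Wstep -mulnb natrM /K; ring.
have KE : forall z w g, K z (upd g [::] w) = K z g.
  move=> z w g; rewrite /K !all_map !big_map.
  have -> : (fun p => upd g [::] w (0%N :: p)) = (fun p => g (0%N :: p)) by [].
  by [].
rewrite /Phi; under SumL_ext => g do rewrite E1.
rewrite vfern SumL_cons.
under eq_bigr => y _ do under SumL_ext => g do rewrite upd_eq KE.
under eq_bigr => y _ do rewrite SumL_scale.
rewrite sum_delta SumL_cat SumL_map0.
set M := map (cons 0%N) (V k).
have inj0 : injective (cons 0%N) by move=> ? ? [].
have mixM : forall g' g2 p, p \in V k -> mix M (lift0 y0 g') g2 (0%N :: p) = g' p.
  by move=> g' g2 p Hp; rewrite /mix /M (mem_map inj0) Hp.
have mixS : forall (g1 g2 : seq nat -> 'I_n) (p : seq nat), p \in S -> mix M g1 g2 p = g2 p.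
  move=> g1 g2 p /mapP[m]; rewrite mem_iota => /andP[m0 _] ->; rewrite /mix /M.
  case: ifP => // /mapP[q _ [e]]; by rewrite e in m0.
have nilV : [::] \in V k by rewrite (Vcons (fern d k)) mem_head.
have E2 : forall g' g2, K x (mix M (lift0 y0 g') g2) =
   ((LC k g')%:R * (a x (g' [::]) * Wg (V k) g')) *
   ((all (fun p => g2 p == (fun _ => l) p) S)%:R * \prod_(p <- S) a x (g2 p)).
  move=> g' g2; rewrite /K (LC_congr (g' := g')); last by move=> p Hp; rewrite mixM.
  rewrite (Wg_congr (g' := g')); last by move=> p Hp; rewrite mixM.
  rewrite mixM // (eq_in_all (a2 := fun p => g2 p == l)); last by move=> p Hp; rewrite mixS.
  rewrite (eq_big_seq (fun p => a x (g2 p))); last by move=> p Hp; rewrite mixS.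
  ring.
under SumL_ext => g' do under SumL_ext => g2 do rewrite E2.
under SumL_ext => g' do rewrite SumL_scale (SumL_delta _ _ _ uniqS).
have E4 : \prod_(p <- S) a x (if p \in S then l else y0) = a x l ^+ d.-1.
  rewrite big_seq (eq_bigr (fun _ => a x l)); last by move=> p ->.
  by rewrite -big_seq prod_const_seq size_map size_iota.
rewrite E4.
have E3 : forall g', (LC k g')%:R * (a x (g' [::]) * Wg (V k) g') * a x l ^+ d.-1 =
   \sum_(y : 'I_n) (a x y * a x l ^+ d.-1) * ((g' [::] == y)%:R * ((LC k g')%:R * Wg (V k) g')).
  move=> g'; rewrite (bigD1 (g' [::])) //= eqxx mul1r big1 ?addr0; last first.
    by move=> y ne; rewrite eq_sym (negPf ne) mul0r mulr0.
  ring.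
under SumL_ext => g' do rewrite E3.
rewrite SumL_sum; apply: eq_bigr => y _; exact: SumL_scale.
Qed.

Lemma Phi0 x : Phi 0 x = (x == j)%:R.
Proof.
rewrite /Phi [vertices _]/= SumL_cons /=.
under eq_bigr => y _ do rewrite /LC /Wg /= /Lf /= !upd_eq big_cons big_nil big_cons /= big_nil.
rewrite /nu /=.
under eq_bigr => y _ do rewrite andbT mulr1 mulr1.
rewrite (bigD1 x) //= eqxx mul1r big1 ?addr0.
  by rewrite eq_sym.
by move=> y /negPf ->; rewrite mul0r.
Qed.

Lemma Phi_eq k x : Phi k x = ((\matrix_(u < n, v < n) (a u v * a u l ^+ d.-1)) ^+ k) x j.
Proof.
elim: k x => [|k IH] x.
  by rewrite Phi0 expr0 !mxE.
rewrite Phi_step exprS -mulmxE mxE; apply: eq_bigr => y _.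
by rewrite IH mxE.
Qed.

Definition Pg (W : seq (seq nat)) (mu : seq nat -> 'I_n) (g : seq nat -> 'I_n) :=
  all (fun p => ((p == [::]) || Lf W p) ==> (g p == mu p)) W.

Lemma zsum_SumL t (mu : seq nat -> 'I_n) : uniq (vertices t) ->
  zsum a t mu = SumL y0 (vertices t)
     (fun g => (Pg (vertices t) mu g)%:R * Wg (vertices t) g).
Proof.
move=> Ut; rewrite /zsum big_mkcond -sum_ffun //; apply: eq_bigr => lam _.
have -> : weight a lam = Wg (vertices t) (glam y0 lam).
  rewrite /weight /Wg -(big_seq_sub Ut _ _ xpredT) /=; apply: eq_bigr => v _.
  rewrite -(big_seq_sub Ut _ _ (fun q => is_child (val v) q)) /=; apply: eq_bigr => u _.
  by rewrite !glam_val.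
have -> : [forall v : vtx t, (is_root v || is_leaf v) ==> (lam v == mu (val v))]
   = Pg (vertices t) mu (glam y0 lam).
  rewrite /Pg -forall_seq_sub; apply: eq_forallb => v.
  by rewrite /is_root /is_leaf /Lf (@forall_seq_sub _ (vertices t) (fun q => ~~ is_child (val v) q)) glam_val.
by case: ifP; rewrite ?mul1r ?mul0r.
Qed.

Lemma Lf_nil' k : (0 < k)%N -> Lf (V k) [::] = false.
Proof. by case: k => // k _; exact: Lf_nil. Qed.

Lemma Pg_fern (i : 'I_n) g : (0 < n)%N ->
  Pg (V n) (mu_fern i j l) g = (g [::] == i) && LC n g.
Proof.
move=> n0.
have allV : forall (P : pred (seq nat)), all P (V n) = P [::] && all P (behead (V n)).
  by move=> P; rewrite {1}(Vcons (fern d n)).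
rewrite /Pg /LC !allV.
have Lf0 : Lf (V n) [::] = false by exact: Lf_nil'.
rewrite Lf0 /= {1}/mu_fern eqxx; congr andb.
apply: eq_in_all => p Hp.
have pn : (p == [::]) = false.
  by apply/negbTE; apply: contraNneq (nil_notin_behead n) => <-.
by rewrite pn /mu_fern pn.
Qed.

End Fern.

Unset Implicit Arguments.
Set Strict Implicit.
Theorem mainTheorem3 (d n : nat) (hd : (1 <= d)%N) (hn : (1 <= n)%N)
    (i j l : 'I_n) :
  zsum (@avar n) (fern d n) (mu_fern i j l) = (Bmat d l ^+ n) i j.
Proof.
rewrite (zsum_SumL (@avar n) i) ?uniqV //.
under SumL_ext => g do rewrite (Pg_fern d j l i g hn) -mulnb natrM -mulrA.
exact: (Phi_eq (@avar n) i d j l n i).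
Qed.
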